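(* There is an absolute constant $c_0>0$ such that the following holds. Let $\mathcal D$ be a distribution on $\mathbb R^d\times\{\pm1\}$ whose $x$-marginal is $(3,L,R,\beta)$-well-behaved, let $w\in\mathbb R^d$ be a unit vector, $\rho\in(0,1]$, and $B=\{x:\langle x,w\rangle\in[\rho R/2,\rho R/\sqrt2]\}$. Let $v\in w^\perp$ and $t_1,t_2>0$ be such that $$\mathbb E_{(z,y)\sim\mathcal D_B^{\pi_w}}\big[\mathbf 1\{-t_1\le\langle v,z\rangle\le-t_2\}\,y\big]<-C'$$ for some $C'>0$. Define $T_w(x)=\frac{1}{\langle w,x\rangle}\mathbf 1\{x\in B,\ -t_1\le\langle v,\pi_w(x)\rangle\le-t_2\}$ (and $T_w(x)=0$ for $x\notin B$). Then $\mathbb E_{(x,y)\sim\mathcal D}[T_w(x)\,y\,\langle w,x\rangle]\le-c_0\,C'\,L\,R^3\rho$.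
   Context: For a unit vector $w$ and $x$ with $\langle w,x\rangle\ne0$, the perspective projection is $\pi_w(x)=\mathrm{proj}_{w^\perp}\big(x/\langle w,x\rangle\big)$, where $\mathrm{proj}_{w^\perp}$ is orthogonal projection onto $w^\perp=\{u:\langle u,w\rangle=0\}$. For a set $B$ and a map $q$, $\mathcal D_B$ is $\mathcal D$ conditioned on $x\in B$, and $\mathcal D_B^{q}$ is the distribution of $(q(x),y)$ for $(x,y)\sim\mathcal D_B$. For $k\in\mathbb Z_+$, $L,R>0$, $\beta\ge1$, a distribution $\mathcal D_x$ on $\mathbb R^d$ is $(k,L,R,\beta)$-well-behaved if (i) for every $k$-dimensional subspace $V$ the projection of $\mathcal D_x$ onto $V$ has a density $\gamma_V$ on $V$ with $\gamma_V(x)\ge L$ for all $x\in V$, $\|x\|_2\le R$; and (ii) for every unit vector $w$ and every $t>0$, $\Pr_{x\sim\mathcal D_x}[|\langle w,x\rangle|\ge t]\le\exp(1-t/\beta)$. *)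

(* Defs.v *)
From mathcomp Require Import all_boot all_order all_algebra.
From mathcomp Require Import all_classical all_reals all_analysis.
Set Implicit Arguments. Unset Strict Implicit. Unset Printing Implicit Defensive.
Import Order.TTheory GRing.Theory Num.Theory.
Local Open Scope ring_scope.
Local Open Scope classical_set_scope.

Section Defs.
Context {R : realType} {d : nat}.

Definition dotv (u x : 'rV[R]_d) : R := \sum_(i < d) u 0 i * x 0 i.

Definition proj_perp (w y : 'rV[R]_d) : 'rV[R]_d :=
  y - (dotv y w / dotv w w) *: w.

(* perspective projection pi_w(x) = proj_{w^perp}(x / <w,x>) *)
Definition persp (w x : 'rV[R]_d) : 'rV[R]_d :=
  proj_perp w ((dotv w x)^-1 *: x).

Definition leb3 := ((@lebesgue_measure R) \x lebesgue_measure \x lebesgue_measure)%E.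

Context {dm : measure_display} {T : measurableType dm} (P : probability T R).

(* the x-marginal (law of X under P) is (3,L,Rad,beta)-well-behaved.
   (i) a 3-dim subspace V is given by an orthonormal basis u1 u2 u3; the
   projection onto V in these (isometric) coordinates has a density gam
   w.r.t. Lebesgue measure on R^3, with gam >= L on the ball of radius Rad.
   (ii) exponential tails in every unit direction. *)
Definition well_behaved3 (X : T -> 'rV[R]_d) (L Rad beta : R) : Prop :=
  (forall u1 u2 u3 : 'rV[R]_d,
      dotv u1 u1 = 1 -> dotv u2 u2 = 1 -> dotv u3 u3 = 1 ->
      dotv u1 u2 = 0 -> dotv u1 u3 = 0 -> dotv u2 u3 = 0 ->
      exists gam : R * R * R -> R,
        measurable_fun setT gam /\ (forall p, 0 <= gam p) /\
        (forall A : set (R * R * R), measurable A ->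
           P ((fun t => (dotv u1 (X t), dotv u2 (X t), dotv u3 (X t))) @^-1` A)
           = (\int[leb3]_(p in A) (gam p)%:E)%E) /\
        (forall p : R * R * R,
           p.1.1 ^+ 2 + p.1.2 ^+ 2 + p.2 ^+ 2 <= Rad ^+ 2 -> L <= gam p))
  /\
  (forall w : 'rV[R]_d, dotv w w = 1 -> forall s : R, 0 < s ->
      (P [set t | (s <= `|dotv w (X t)|)%R] <= (expR (1 - s / beta)%R)%:E)%E).

Definition Ex (f : T -> R) : R := fine (\int[P]_t (f t)%:E)%E.

Definition Ex_cond (X : T -> 'rV[R]_d) (B : set 'rV[R]_d) (f : T -> R) : R :=
  Ex (fun t => (\1_B (X t)) * f t) / fine (P (X @^-1` B)).

End Defs.

Definition band {R : realType} {d : nat} (w : 'rV[R]_d) (rho Rad : R) : set 'rV[R]_d :=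
  [set x | rho * Rad / 2 <= dotv x w <= rho * Rad / Num.sqrt 2].

Definition slab {R : realType} {d : nat} (w v : 'rV[R]_d) (t1 t2 : R) : set 'rV[R]_d :=
  [set x | - t1 <= dotv v (persp w x) <= - t2].

Definition Tw {R : realType} {d : nat} (w v : 'rV[R]_d) (rho Rad t1 t2 : R)
  (x : 'rV[R]_d) : R :=
  (dotv w x)^-1 * \1_(band w rho Rad `&` slab w v t1 t2) x.

(* Main.v *)
Require Import Defs.
From mathcomp Require Import all_boot all_order all_algebra.
From mathcomp Require Import all_classical all_reals all_analysis.
Import Order.TTheory GRing.Theory Num.Theory.
Local Open Scope ring_scope.
Local Open Scope classical_set_scope.
From Stdlib Require Import Lia.
From mathcomp Require Import zify ring lra.
Section LA.
Variables (R : realType) (d : nat).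

Lemma dotvE (u x : 'rV[R]_d) : dotv u x = (u *m x^T) 0 0.
Proof. rewrite /dotv !mxE; apply: eq_bigr => i _; rewrite mxE. by []. Qed.

Lemma dotvC (u x : 'rV[R]_d) : dotv u x = dotv x u.
Proof. rewrite /dotv; apply: eq_bigr => i _; by rewrite mulrC. Qed.

Lemma dotvZ (a : R) (u x : 'rV[R]_d) : dotv (a *: u) x = a * dotv u x.
Proof. rewrite /dotv mulr_sumr; apply: eq_bigr => i _; by rewrite mxE mulrA. Qed.

Lemma dotv_gt0 (u : 'rV[R]_d) : u != 0 -> 0 < dotv u u.
Proof.
move=> u0; rewrite lt_def; apply/andP; split; last first.
  by rewrite /dotv sumr_ge0 // => i _; rewrite -expr2 sqr_ge0.
apply/eqP => /eqP; rewrite /dotv psumr_eq0 => [|i _]; last by rewrite -expr2 sqr_ge0.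
move/allP => H; move/eqP: u0; apply; apply/matrixP => i j.
rewrite (ord1 i) mxE; have := H j (mem_index_enum _).
by rewrite -expr2 sqrf_eq0 => /eqP.
Qed.

Lemma exists_perp k (M : 'M[R]_(k, d)) : (k < d)%N ->
  exists u : 'rV[R]_d, dotv u u = 1 /\ M *m u^T = 0.
Proof.
move=> kd.
have : kermx M^T != 0.
  apply/eqP => K0; have := mxrank_ker M^T; rewrite K0 mxrank0.
  have := rank_leq_col M^T; lia.
case/rowV0Pn => v /sub_kermxP vK v0.
have vp : 0 < dotv v v by apply: dotv_gt0.
exists ((Num.sqrt (dotv v v))^-1 *: v); split.
  rewrite dotvZ dotvC dotvZ mulrA -invfM -expr2 sqr_sqrtr ?ltW //.
  by rewrite mulVf // gt_eqF.
rewrite linearZ /= -scalemxAr.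
have -> : M *m v^T = (v *m M^T)^T by rewrite trmx_mul trmxK.
by rewrite vK trmx0 scaler0.
Qed.
Lemma ortho3 (w : 'rV[R]_d) : (3 <= d)%N -> exists u2 u3 : 'rV[R]_d,
  dotv u2 u2 = 1 /\ dotv u3 u3 = 1 /\ dotv w u2 = 0 /\ dotv w u3 = 0 /\ dotv u2 u3 = 0.
Proof.
move=> d3.
have [u2 [h22 hw2]] := @exists_perp 1 w ltac:(lia).
have [u3 [h33 h3]] := @exists_perp (1 + 1) (col_mx w u2) ltac:(lia).
move: h3; rewrite mul_col_mx => /eqP; rewrite col_mx_eq0 => /andP[/eqP hw3 /eqP h23].
exists u2, u3; do 2!split => //.
by rewrite !dotvE hw2 hw3 h23 !mxE.
Qed.
End LA.


Lemma leb3_box (R : realType) (a b c e f g : R) : a <= b -> c <= e -> f <= g ->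
  leb3 (`[a, b] `*` `[c, e] `*` `[f, g]) = ((b - a) * (e - c) * (g - f))%:E.
Proof.
move=> ab ce fg.
rewrite /leb3 product_measure1E; last first.
- exact (@measurable_itv R `[f, g]%R).
- apply: measurableX; [exact (@measurable_itv R `[a, b]%R)|exact (@measurable_itv R `[c, e]%R)].
rewrite [X in (X * _)%E]product_measure1E; [|exact (@measurable_itv R `[a, b]%R)|exact (@measurable_itv R `[c, e]%R)].
rewrite /= !lebesgue_measure_itv /= !lte_fin.
have H (x y : R) : x <= y -> (if (x < y)%R then y%:E + (- x)%:E else 0%R) = (y - x)%:E.
  rewrite le_eqVlt => /orP[/eqP->|->]; by rewrite ?ltxx ?subrr.
by rewrite (H _ _ ab) (H _ _ ce) (H _ _ fg) -!EFinM.
Qed.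

Lemma int_lb (R : realType) (gam : R * R * R -> R) (mgam : measurable_fun setT gam)
  (g0 : forall p, 0 <= gam p) (A A' : set (R * R * R))
  (mA : measurable A) (mA' : measurable A') (sub : A `<=` A') (L : R)
  (L0 : 0 <= L) (HL : forall p, A p -> L <= gam p) :
  (L%:E * leb3 A <= \int[leb3]_(p in A') (gam p)%:E)%E.
Proof.
have mg := (measurable_realfun.measurable_EFinP _ gam).2 mgam.
apply: (@le_trans _ _ (\int[leb3]_(p in A) (gam p)%:E)%E); last first.
  apply: ge0_subset_integral => //.
    exact: measurable_funS mg.
  by move=> x _; rewrite lee_fin.
have h := integral_cst leb3 mA L%:E. rewrite -h.
apply: ge0_le_integral.
- exact mA.
- by move=> x _; rewrite lee_fin.
- exact: measurable_cst.
- have := measurable_funS (@measurableT _ _) (@subsetT _ A) mg. exact.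
- by move=> x Ax; rewrite /= lee_fin HL.
Qed.

Theorem mainTheorem8 :
  exists c0 : rat, 0 < c0 /\
  forall (R : realType) (d : nat) (dm : measure_display) (T : measurableType dm)
    (P : probability T R) (X : T -> 'rV[R]_d) (Y : T -> R)
    (L Rad beta : R) (w v : 'rV[R]_d) (rho t1 t2 C' : R),
    (3 <= d)%N ->
    (forall i : 'I_d, measurable_fun setT (fun t => X t 0 i)) ->
    measurable_fun setT Y ->
    (forall t, Y t = 1 \/ Y t = -1) ->
    0 < L -> 0 < Rad -> 1 <= beta ->
    well_behaved3 P X L Rad beta ->
    dotv w w = 1 ->
    0 < rho -> rho <= 1 ->
    dotv v w = 0 ->
    0 < t1 -> 0 < t2 -> 0 < C' ->
    Ex_cond P X (band w rho Rad)
      (fun t => \1_(slab w v t1 t2) (X t) * Y t) < - C' ->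
    Ex P (fun t => Tw w v rho Rad t1 t2 (X t) * Y t * dotv w (X t))
      <= - (ratr c0) * C' * L * Rad ^+ 3 * rho.
Proof.
exists (5%:R)^-1; split; first by rewrite invr_gt0.
move=> R d dm T P X Y L Rad beta w v rho t1 t2 C' d3 mX mY HY L0 R0 b1 [Hwb _] ww
  rho0 rho1 vw t10 t20 C0 Hc.
set s := Num.sqrt (2 : R).
have s0 : 0 < s by rewrite sqrtr_gt0.
have s2 : s ^+ 2 = 2 by rewrite sqr_sqrtr.
set q := s^-1.
have qs : q * s = 1 by rewrite mulVf // gt_eqF.
have q0 : 0 < q by rewrite invr_gt0.
have q2 : q ^+ 2 * 2 = 1 by rewrite -s2 -exprMn qs expr1n.
have q7 : 7 / 10 <= q by nra.
set a := rho * Rad / 2.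
set b := rho * Rad / s.
have Heq : (fun t => Tw w v rho Rad t1 t2 (X t) * Y t * dotv w (X t)) =
    (fun t => \1_(band w rho Rad) (X t) * (\1_(slab w v t1 t2) (X t) * Y t)).
  apply: funext => t; rewrite /Tw !indicE in_setI.
  case: (boolP (X t \in band w rho Rad)) => /= hb; last by rewrite mulr0 !mul0r.
  move/set_mem: hb; rewrite /band /= dotvC => /andP[h1 _].
  have D0 : dotv w (X t) != 0.
    by rewrite gt_eqF // (lt_le_trans _ h1) // divr_gt0 // mulr_gt0.
  by rewrite mulrAC (mulrAC _^-1) mulVf // !mul1r.
rewrite Heq.
move: Hc; rewrite /Ex_cond.
set E := Ex P _.
set pB := P (X @^-1` band w rho Rad).
have rR : 0 < rho * Rad by rewrite mulr_gt0.
have ab : a <= b.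
  rewrite /a /b -/q; have : 0 <= (q - 1/2) * (rho * Rad) by rewrite mulr_ge0 // ?subr_ge0; lra.
  lra.
have a0 : 0 < a by rewrite /a divr_gt0 // mulr_gt0.
have Pb : (((L * Rad ^+ 3 * rho) / 5)%:E <= pB)%E.
  have [u2 [u3 [h22 [h33 [hw2 [hw3 h23]]]]]] := @ortho3 R d w d3.
  have [gam [mg [g0 [HP Hball]]]] := Hwb w u2 u3 ww h22 h33 hw2 hw3 h23.
  set A' : set (R * R * R) := `[a, b] `*` setT `*` setT.
  set A : set (R * R * R) := `[a, b] `*` `[- (Rad / 2), Rad / 2] `*` `[- (Rad / 2), Rad / 2].
  rewrite /pB; have -> : X @^-1` band w rho Rad =
     (fun t => (dotv w (X t), dotv u2 (X t), dotv u3 (X t))) @^-1` A'.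
    apply/seteqP; split => t /=; rewrite /band /= /A' /= in_itv /= dotvC //.
    by move=> [[h _] _].
  rewrite HP; last first.
    apply: measurableX; [apply: measurableX|]; [apply: measurable_itv| |]; exact: measurableT.
  apply: (le_trans _ (@int_lb R gam mg g0 A A' _ _ _ L (ltW L0) _)).
  - have hR : - (Rad / 2) <= Rad / 2 by lra.
    rewrite /A (@leb3_box R _ _ _ _ _ _ ab hR hR) -EFinM lee_fin.
    have hba : rho * Rad / 5 <= b - a.
      rewrite /b /a -/q.
      have : 0 <= (q - 7/10) * (rho * Rad) by rewrite mulr_ge0 // ?subr_ge0; lra.
      lra.
    have h2 : Rad / 2 - - (Rad / 2) = Rad by lra.
    rewrite h2.
    have := ler_wpM2r (ltW (mulr_gt0 (mulr_gt0 R0 R0) L0)) hba.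
    lra.
  - by apply: measurableX; [apply: measurableX|]; apply: measurable_itv.
  - by apply: measurableX; [apply: measurableX|]; [apply: measurable_itv| |].
  - by move=> [[x y] z] [[hx _] _].
  - move=> [[x y] z] [[hx hy] hz]; apply: Hball => /=.
    move: hx hy hz; rewrite /= !in_itv /= => /andP[x1 x2] /andP[y1 y2] /andP[z1 z2].
    have hx2 : x ^+ 2 <= b ^+ 2 by nra.
    have hb2 : b ^+ 2 <= Rad ^+ 2 / 2.
      rewrite /b -/q !exprMn.
      have q2' : q ^+ 2 = 1 / 2 by lra.
      rewrite q2'.
      have r2 : rho ^+ 2 <= 1 by nra.
      have : 0 <= (1 - rho ^+ 2) * Rad ^+ 2 by rewrite mulr_ge0 ?subr_ge0 // ?exprn_ge0 // ltW.
      lra.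
    have : y ^+ 2 <= Rad ^+ 2 / 4 by nra.
    have : z ^+ 2 <= Rad ^+ 2 / 4 by nra.
    lra.
move=> Hc.
have pos : 0 < L * Rad ^+ 3 * rho / 5 by rewrite divr_gt0 // !mulr_gt0 // exprn_gt0.
move: Pb Hc; clearbody pB; case: pB => [r| |] /= Pb Hc; last 2 first.
- by move: Hc; rewrite invr0 mulr0; lra.
- by move: Hc; rewrite invr0 mulr0; lra.
rewrite lee_fin in Pb.
have r0 : 0 < r by lra.
rewrite ltr_pdivrMr // in Hc.
rewrite fmorphV rmorph_nat.
have := ler_wpM2l (ltW C0) Pb.
lra.
Qed.
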